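(* The sum $\oplus$ and the trace operator $\mathrm{tr}$ of $\mathcal M_{\max\star}(\mathbb S^{\mathrm{m},\mathbb P}_r)$ are monotone with respect to the orders $\le_{\mathcal M}$ on its hom-sets.
   Context: Notation: $[k]=\{1,\dots,k\}$; $T(X)=X+\mathbb R\times X+\{\exists^*,\forall^*\}$; diagrammatic composition. $\mathbb S^{\mathrm{m},\mathbb P}_r$: objects natural numbers; arrows $f:m\to n$ are functions $[m]\to T([n])$ such that for all $i\ne j$, $f(i)\notin[n]$ or $f(j)\notin\{f(i)\}\cup\mathbb R\times\{f(i)\}$; hom-sets ordered pointwise by the least order on $T([n])$ with $(r_1,i)\le(r_2,i)$ if $r_1\ge r_2$, $\exists^*\le z$, $z\le\forall^*$. Operations: $(f;g)(i)=f(i)$ if $f(i)\in\{\exists^*,\forall^*\}$; $g(j)$ if $f(i)=j$; $g(j)$ if $f(i)=(r,j)$, $g(j)\in\{\exists^*,\forall^*\}$; $(r,k)$ if $f(i)=(r,j)$, $g(j)=k$; $(r+r',k)$ if $f(i)=(r,j)$, $g(j)=(r',k)$. $(f\oplus g)(i)=f(i)$ ($i\le m$), $(f\oplus g)(m+i)$ is $g(i)$ with its index $j$ (if any) shifted to $n+j$. Trace of $f:l+m\to l+n$ at $i\in[m]$: $v_0=l+i$; if $j=0$ or $v_j\in[l]$, $v_{j+1}=f(v_j)$; if $v_j=(r,k)$, $k\in[l]$, $v_{j+1}=f(k)$; otherwise stop. If finite $(v_0..v_K)$ with $S$ the sum of first components of $v_j\in\mathbb R\times[l+n]$ ($1\le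 j\le K$): $v_K$ if $v_K\in\{\exists^*,\forall^*\}$; $k$ if $v_K=l+k$ and $v_j\in[l]$ for $1\le j<K$; $(S,k)$ if $v_K=l+k$ and some earlier $v_j\in\mathbb R\times[l]$; $(S,k)$ if $v_K=(r,l+k)$. If infinite, with $w'_t$ the first components of the (infinitely many) entries in $\mathbb R\times[l]$: $\exists^*$ if $\liminf_N\frac1N\sum_{t\le N}w'_t\ge0$, else $\forall^*$. For a poset $X$, $\mathcal M(X)$ is the set of nonempty finite subsets of pairwise incomparable elements, ordered by $S\le_{\mathcal M}T$ iff every $x\in S$ has some $y\in T$ with $x\le y$; $S^{\circ}$ is the set of maximal elements of $S$. $\mathcal M_{\max\star}(\mathbb S^{\mathrm{m},\mathbb P}_r)$ has objects natural numbers and arrows $m\to n$ the elements of $\mathcal M(\mathbb S^{\mathrm{m},\mathbb P}_r(m,n))$, with $S;T=\{f;g\mid f\in S,g\in T\}^{\circ}$, $S\oplus T=\{f\oplus g\mid f\in S,g\in T\}^{\circ}$, $\mathrm{tr}^l_{m,n}(S)=\{\mathrm{tr}^l_{m,n}(f)\mid f\in S\}^{\circ}$. *)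

(* Defs.v *)
From HB Require Import structures.
From mathcomp Require Import all_boot all_order all_algebra.
From mathcomp Require Import classical_sets boolp cardinality reals ereal sequences.
Set Implicit Arguments. Unset Strict Implicit. Unset Printing Implicit Defensive.
Import Order.TTheory GRing.Theory Num.Theory.
Local Open Scope classical_set_scope.
Local Open Scope ring_scope.

Section Sm.
Variable R : realType.

(* T([n]) = [n] + R x [n] + {exists*, forall*}; indices are 0-based ('I_n). *)
Inductive Tm (n : nat) : Type :=
| Ix of 'I_n
| Wt of R & 'I_n
| Ex
| Al.

Arguments Ex {n}. Arguments Al {n}.

Definition arrow (m n : nat) := 'I_m -> Tm n.

Definition wf_arrow m n (f : arrow m n) : Prop :=
  forall i j : 'I_m, i <> j -> forall k : 'I_n,
    f i = Ix k -> f j <> Ix k /\ (forall r : R, f j <> Wt r k).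

Definition leT n (x y : Tm n) : Prop :=
  x = y \/ x = Ex \/ y = Al \/
  exists (i : 'I_n) (r1 r2 : R), x = Wt r1 i /\ y = Wt r2 i /\ r2 <= r1.

Definition leA m n (f g : arrow m n) : Prop := forall i, leT (f i) (g i).

Definition mapT n n' (h : 'I_n -> 'I_n') (x : Tm n) : Tm n' :=
  match x with
  | Ix k => Ix (h k)
  | Wt r k => Wt r (h k)
  | Ex => Ex
  | Al => Al
  end.

Definition sumA m n m' n' (f : arrow m n) (g : arrow m' n') : arrow (m + m') (n + n') :=
  fun i => match split i with
           | inl a => mapT (@lshift n n') (f a)
           | inr b => mapT (@rshift n n') (g b)
           end.

Section Trace.
Variables l m n : nat.
Variable f : arrow (l + m) (l + n).

Definition tstep (v : Tm (l + n)) : option (Tm (l + n)) :=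
  match v with
  | Ix k | Wt _ k => match split k with
                     | inl a => Some (f (lshift m a))
                     | inr _ => None
                     end
  | _ => None
  end.

(* twalk i j = v_{j+1} (None once the sequence has stopped) *)
Fixpoint twalk (i : 'I_m) (j : nat) : option (Tm (l + n)) :=
  match j with
  | 0 => Some (f (rshift l i))
  | j'.+1 => obind tstep (twalk i j')
  end.

Definition isWt (o : option (Tm (l + n))) : bool :=
  if o is Some (Wt _ _) then true else false.

Definition weightT (o : option (Tm (l + n))) : R :=
  if o is Some (Wt r _) then r else 0.

Definition tfinite (i : 'I_m) : Prop := exists j, twalk i j = None.

(* position K-1 of the last entry v_K (when finite) *)
Definition tlast (i : 'I_m) : nat :=
  xget 0%N [set K | twalk i K <> None /\ twalk i K.+1 = None].

Definition wcount (i : 'I_m) (j : nat) : nat := \sum_(k < j) isWt (twalk i k).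

(* w'_t (0-based): weight of the (t+1)-th entry of the sequence lying in R x [l] *)
Definition wpos (i : 'I_m) (t : nat) : nat :=
  xget 0%N [set j | isWt (twalk i j) /\ wcount i j = t].
Definition wprime (i : 'I_m) (t : nat) : R := weightT (twalk i (wpos i t)).

(* (1/N) sum_{t <= N} w'_t, N >= 1 (value at N = 0 irrelevant for liminf) *)
Definition wavg (i : 'I_m) (N : nat) : \bar R :=
  (if N is 0 then 0 else (N%:R)^-1 * \sum_(t < N) wprime i t)%:E.

Definition trace_at (i : 'I_m) : Tm n :=
  if pselect (tfinite i) then
    let K := tlast i in
    let vK := if twalk i K is Some v then v else Ex in
    let S := \sum_(j < K.+1) weightT (twalk i j) in
    let earlierW := [exists j : 'I_K, isWt (twalk i j)] in
    match vK with
    | Ex => Ex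
    | Al => Al
    | Ix k => match split k with
              | inr k' => if earlierW then Wt S k' else Ix k'
              | inl _ => Ex (* impossible: the sequence would not stop *)
              end
    | Wt _ k => match split k with
                | inr k' => Wt S k'
                | inl _ => Ex (* impossible *)
                end
    end
  else
    if (0 <= limn_einf (wavg i))%E then Ex else Al.

End Trace.

Definition trA l m n (f : arrow (l + m) (l + n)) : arrow m n :=
  fun i => trace_at f i.

Definition isM m n (S : set (arrow m n)) : Prop :=
  S !=set0 /\ finite_set S /\ (forall f, S f -> wf_arrow f) /\
  (forall f g, S f -> S g -> f <> g -> ~ leA f g).

Definition leM m n (S T : set (arrow m n)) : Prop :=
  forall f, S f -> exists2 g, T g & leA f g.

Definition maxel m n (S : set (arrow m n)) : set (arrow m n) :=
  [set f | S f /\ forall g, S g -> leA f g -> g = f].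

Definition sumM m n m' n' (S : set (arrow m n)) (T : set (arrow m' n')) :
  set (arrow (m + m') (n + n')) :=
  maxel [set h | exists2 f, S f & exists2 g, T g & h = sumA f g].

Definition trM l m n (S : set (arrow (l + m) (l + n))) : set (arrow m n) :=
  maxel [set h | exists2 f, S f & h = trA f].

End Sm.
Arguments Ex {R n}. Arguments Al {R n}.

(* Main.v *)
Require Import Defs.
From HB Require Import structures.
From mathcomp Require Import all_boot all_order all_algebra.
From mathcomp Require Import classical_sets boolp cardinality reals ereal sequences.
From mathcomp Require Import topology normedtype.
Set Implicit Arguments. Unset Strict Implicit. Unset Printing Implicit Defensive.
Import Order.TTheory GRing.Theory Num.Theory.
Local Open Scope classical_set_scope.
Local Open Scope ring_scope.

Lemma le_limn_einf (R : realType) (u v : (\bar R)^nat) : (forall n, (u n <= v n)%E) ->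
  (limn_einf u <= limn_einf v)%E.
Proof.
move=> uv; rewrite !limn_einf_lim; apply: lee_lim; [exact: is_cvg_einfs..|].
apply: nearW => n /=. apply: le_ereal_inf_tmp => x [k kn <-].
apply: le_trans (uv k) . apply: ereal_inf_lbound; by exists k.
Qed.

Lemma exists_max T (le : T -> T -> Prop) (A : set T) :
  (forall x y z, le x y -> le y z -> le x z) ->
  (forall x y, le x y -> le y x -> x = y) ->
  finite_set A -> forall x y, A y -> le x y ->
  exists2 g, A g & le x g /\ (forall h, A h -> le g h -> h = g).
Proof.
elim/Pchoice: T => T in le A *; move=> tr an.
move=> /finite_seqP[s ->] {A}.
elim: s => [//|a s IH] x y /=.
have [[y' y's xy']|no] := pselect (exists2 y', y' \in s & le x y').
  have [g gs [xg gm]] := IH x y' y's xy'.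
  have [ga|nga] := pselect (le g a).
    move=> _ _; exists a; first by rewrite inE eqxx.
    split; first exact: tr xg ga.
    move=> h; rewrite inE => /orP[/eqP->//|hs] ah.
    have hg := gm h hs (tr _ _ _ ga ah).
    by subst h; apply: an.
  move=> _ _; exists g; first by rewrite inE gs orbT.
  split=> // h; rewrite inE => /orP[/eqP->//|hs] gh; last exact: gm.
move=> ys xy. have xa : le x a.
  move: ys; rewrite inE => /orP[/eqP<-//|ys]; exfalso; apply: no; by exists y.
exists a; first by rewrite inE eqxx.
split=> // h; rewrite inE => /orP[/eqP->//|hs] ah.
exfalso; apply: no; exists h => //; exact: tr xa ah.
Qed.



Lemma leT_refl (R : realType) n (x : Tm R n) : leT x x. Proof. by left. Qed.

Section Walk.
Variables (R : realType) (l m n : nat).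
Implicit Types f : arrow R (l + m) (l + n).

Lemma twalk_None f i j d : twalk f i j = None -> twalk f i (j + d) = None.
Proof. by move=> h; elim: d => [|d IH]; rewrite ?addn0 ?addnS //= IH. Qed.

Lemma tlast_spec f i j : twalk f i j <> None -> twalk f i j.+1 = None -> tlast f i = j.
Proof.
move=> h1 h2; apply: xget_unique => [//|K [k1 k2]].
have [ltKj|ltjK|//] := ltngtP K j.
- exfalso; apply: h1; rewrite -(subnKC ltKj); exact: twalk_None.
- exfalso; apply: k1; rewrite -(subnKC ltjK); exact: twalk_None.
Qed.

Lemma trace_Ex f i j : twalk f i j = Some Ex -> trace_at f i = Ex.
Proof.
move=> h; have h2 : twalk f i j.+1 = None by rewrite /= h.
have tl : tlast f i = j by apply: tlast_spec; rewrite ?h.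
rewrite /trace_at; case: pselect => [?|nf]; last by exfalso; apply: nf; exists j.+1.
by rewrite tl h.
Qed.

Lemma trace_Al f i j : twalk f i j = Some Al -> trace_at f i = Al.
Proof.
move=> h; have h2 : twalk f i j.+1 = None by rewrite /= h.
have tl : tlast f i = j by apply: tlast_spec; rewrite ?h.
rewrite /trace_at; case: pselect => [?|nf]; last by exfalso; apply: nf; exists j.+1.
by rewrite tl h.
Qed.
End Walk.

Section Rel.
Variables (R : realType) (l m n : nat).
Variables (f f' : arrow R (l + m) (l + n)).
Hypothesis hff : leA f f'.

Definition rel (o o' : option (Tm R (l + n))) : Prop :=
  o = o' \/ exists k (r r' : R), o = Some (Wt r k) /\ o' = Some (Wt r' k) /\ r' <= r.

Lemma leT_rel (x y : Tm R (l + n)) : leT x y -> rel (Some x) (Some y) \/ x = Ex \/ y = Al.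
Proof.
move=> [->|[->|[->|[k [r1 [r2 [-> [-> h]]]]]]]].
- by left; left.
- by right; left.
- by right; right.
- by left; right; exists k, r1, r2.
Qed.

Lemma rel_step o o' : rel o o' ->
  rel (obind (tstep f) o) (obind (tstep f') o') \/
  obind (tstep f) o = Some Ex \/ obind (tstep f') o' = Some Al.
Proof.
have base (k : 'I_(l + n)) : rel (tstep f (Ix R k)) (tstep f' (Ix R k)) \/
  tstep f (Ix R k) = Some Ex \/ tstep f' (Ix R k) = Some Al.
  rewrite /=; case: split => a; last by left; left.
  have [h|[->|->]] := leT_rel (hff (lshift m a)); by [left|right;left|right;right].
move=> [<-|[k [r [r' [-> [-> _]]]]]]; last exact: base.
case: o => [[k|r k||]|] /=; try by left; left.
- exact: base.
- exact: base.
Qed.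

Variable i : 'I_m.

Lemma walk_rel j :
  (exists j0, twalk f i j0 = Some Ex) \/ (exists j0, twalk f' i j0 = Some Al) \/
  rel (twalk f i j) (twalk f' i j).
Proof.
elim: j => [|j IH] /=.
  have [h|[h|h]] := leT_rel (hff (rshift l i)); [right; right| left; exists 0%N | right; left; exists 0%N] => //=; by rewrite h.
move: IH => [h|[h|h]]; [by left|by right; left|].
have [h'|[h'|h']] := rel_step h; [by right; right|left; exists j.+1 => //=|right; left; exists j.+1 => //=].
Qed.


Lemma relNone o o' : rel o o' -> (o = None <-> o' = None).
Proof. by move=> [->|[k [r [r' [-> [-> _]]]]]]. Qed.

Lemma isWt_rel o o' : rel o o' -> isWt o = isWt o'.
Proof. by move=> [->|[k [r [r' [-> [-> _]]]]]]. Qed.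

Lemma weight_rel o o' : rel o o' -> weightT o' <= weightT o.
Proof. by move=> [->|[k [r [r' [-> [-> h]]]]]]. Qed.

Lemma trace_mono : leT (trace_at f i) (trace_at f' i).
Proof.
have [[j0 h]|noE] := pselect (exists j0, twalk f i j0 = Some Ex).
  by rewrite (trace_Ex h); right; left.
have [[j0 h]|noA] := pselect (exists j0, twalk f' i j0 = Some Al).
  by rewrite (trace_Al h); right; right; left.
have Rj j : rel (twalk f i j) (twalk f' i j).
  by case: (walk_rel j) => [//|[//|//]].
have tfin : tfinite f i <-> tfinite f' i.
  by split=> -[j hj]; exists j; apply/(relNone (Rj j)).
have tl : tlast f' i = tlast f i.
  rewrite /tlast; congr xget; apply/funext => K; apply/propext.
  have := relNone (Rj K); have := relNone (Rj K.+1); rewrite /=; tauto.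
have wc j : wcount f' i j = wcount f i j.
  by apply: eq_bigr => k _; rewrite (isWt_rel (Rj k)).
have wp t : wpos f' i t = wpos f i t.
  rewrite /wpos; congr xget; apply/funext => j /=; apply/propext.
  by rewrite wc (isWt_rel (Rj j)).
have wpr t : wprime f' i t <= wprime f i t.
  by rewrite /wprime wp; apply: weight_rel.
have wav N : (wavg f' i N <= wavg f i N)%E.
  case: N => [|N]; rewrite /wavg lee_fin //.
  apply: ler_wpM2l; first by rewrite invr_ge0.
  by apply: ler_sum => t _.
rewrite /trace_at; case: pselect => Hf; case: pselect => Hf'.
- rewrite tl.
  have eW : [exists j : 'I_(tlast f i), isWt (twalk f' i j)] =
            [exists j : 'I_(tlast f i), isWt (twalk f i j)].
    by apply: eq_existsb => j; rewrite (isWt_rel (Rj j)).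
  rewrite eW.
  have hS : \sum_(j < (tlast f i).+1) weightT (twalk f' i j) <=
            \sum_(j < (tlast f i).+1) weightT (twalk f i j).
    by apply: ler_sum => j _; apply: weight_rel.
  move: hS (Rj (tlast f i)).
  move: (\sum_(j < (tlast f i).+1) weightT (twalk f i j)) => S.
  move: (\sum_(j < (tlast f i).+1) weightT (twalk f' i j)) => S' hS.
  move: [exists j : 'I_(tlast f i), isWt (twalk f i j)] => b.
  move=> [<-|[k [r [r' [-> [-> _]]]]]].
    case: (twalk f i (tlast f i)) => [[k|r k||]|] /=; try exact: leT_refl;
    case: split => a; try exact: leT_refl.
      case: b; last exact: leT_refl.
      by right; right; right; exists a, S, S'.
    by right; right; right; exists a, S, S'.
  case: split => a; first exact: leT_refl.
  by right; right; right; exists a, S, S'.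
- by exfalso; apply: Hf'; apply/tfin.
- by exfalso; apply: Hf; apply/tfin.
- have hl := le_limn_einf wav.
  case: ifPn => h1; case: ifPn => h2; try exact: leT_refl.
  + by right; right; left.
  + by exfalso; move: h1; rewrite (le_trans h2 hl).
Qed.
End Rel.
Section Ord.
Variable R : realType.


Lemma leT_trans n (x y z : Tm R n) : leT x y -> leT y z -> leT x z.
Proof.
move=> [->//|[->|[->|[i [r1 [r2 [-> [-> h]]]]]]]].
- by right; left.
- by move=> [<-|[//|[->|[? [? [? [//]]]]]]]; right; right; left.
- move=> [<-|[//|[->|[i' [r2' [r3 [[e1 e2] [-> h']]]]]]]].
  + by right; right; right; exists i, r1, r2.
  + by right; right; left.
  + subst; right; right; right; exists i', r1, r3; split=> //; split=> //.
    exact: le_trans h' h.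
Qed.

Ltac crush := repeat match goal with
  | H : _ \/ _ |- _ => destruct H
  | H : exists _, _ |- _ => destruct H
  | H : _ /\ _ |- _ => destruct H
  end; subst; try discriminate.

Lemma leT_Wt n (r1 r2 : R) (i j : 'I_n) : leT (Wt r1 i) (Wt r2 j) -> i = j /\ r2 <= r1.
Proof.
move=> [[-> ->]|[|[|[k [a [b [[-> ->] [[-> ->] h]]]]]]]] //; try discriminate.
Qed.

Lemma leT_Al n (x : Tm R n) : leT Al x -> x = Al.
Proof. by move=> [<-|[|[->|[k [a [b [? _]]]]]]]; try discriminate. Qed.

Lemma leT_Ex n (x : Tm R n) : leT x Ex -> x = Ex.
Proof. by move=> [->|[->|[|[k [a [b [_ [? _]]]]]]]]; try discriminate. Qed.

Lemma leT_anti n (x y : Tm R n) : leT x y -> leT y x -> x = y.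
Proof.
move=> [->//|[->|[->|[i [r1 [r2 [-> [-> h]]]]]]]].
- by move=> /leT_Ex.
- by move=> /leT_Al.
- move=> /leT_Wt [_ h']; congr Wt; apply/eqP; rewrite eq_le h h' //.
Qed.

Lemma leA_trans m n (f g h : arrow R m n) : leA f g -> leA g h -> leA f h.
Proof. by move=> fg gh i; apply: leT_trans (fg i) (gh i). Qed.

Lemma leA_refl m n (f : arrow R m n) : leA f f. Proof. by move=> i; left. Qed.

Lemma leA_anti m n (f g : arrow R m n) : leA f g -> leA g f -> f = g.
Proof. by move=> fg gf; apply/funext => i; apply: leT_anti. Qed.

Lemma leT_map n n' (h : 'I_n -> 'I_n') (x y : Tm R n) :
  leT x y -> leT (mapT h x) (mapT h y).
Proof.
move=> [->|[->|[->|[i [r1 [r2 [-> [-> le]]]]]]]]; try by [left|right;left|right;right;left].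
by right; right; right; exists (h i), r1, r2.
Qed.

Lemma sumA_mono m n m' n' (f f' : arrow R m n) (g g' : arrow R m' n') :
  leA f f' -> leA g g' -> leA (sumA f g) (sumA f' g').
Proof.
by move=> ff gg i; rewrite /sumA; case: split => a; apply: leT_map.
Qed.
End Ord.

Theorem propositionD16 (R : realType) :
  (forall (m n m' n' : nat) (S1 S2 : set (arrow R m n)) (T1 T2 : set (arrow R m' n')),
      isM S1 -> isM S2 -> isM T1 -> isM T2 ->
      leM S1 S2 -> leM T1 T2 ->
      leM (sumM S1 T1) (sumM S2 T2)) /\
  (forall (l m n : nat) (S1 S2 : set (arrow R (l + m) (l + n))),
      isM S1 -> isM S2 -> leM S1 S2 ->
      leM (trM S1) (trM S2)).
Proof.
split.
- move=> m n m' n' S1 S2 T1 T2 _ [_ [fS2 _]] _ [_ [fT2 _]] hS hT h [[f Sf [g Tg ->]] _].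
  have [f' Sf' ff] := hS f Sf.
  have [g' Tg' gg] := hT g Tg.
  set B := [set h | exists2 f, S2 f & exists2 g, T2 g & h = sumA f g].
  have fB : finite_set B.
    have -> : B = (fun p => sumA p.1 p.2) @` (S2 `*` T2).
      apply/seteqP; split => x.
        by move=> [a Sa [b Tb ->]]; exists (a, b).
      by move=> [[a b] [/= Sa Tb] <-]; exists a => //; exists b.
    by apply: finite_image; apply: finite_setX.
  have [k Bk [hk km]] := exists_max (@leA_trans R _ _) (@leA_anti R _ _) fB
    (ex_intro2 _ _ _ Sf' (ex_intro2 _ _ _ Tg' erefl)) (leA_refl _).
  exists k; first by split.
  exact: leA_trans (sumA_mono ff gg) hk.
- move=> l m n S1 S2 _ [_ [fS2 _]] hS h [[f Sf ->] _].
  have [f' Sf' ff] := hS f Sf.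
  set B := [set h | exists2 f, S2 f & h = trA f].
  have fB : finite_set B.
    have -> : B = (@trA R l m n) @` S2.
      apply/seteqP; split => x.
        by move=> [a Sa ->]; exists a.
      by move=> [a Sa <-]; exists a.
    exact: finite_image.
  have [k Bk [hk km]] := exists_max (@leA_trans R _ _) (@leA_anti R _ _) fB
    (ex_intro2 _ _ _ Sf' erefl) (leA_refl _).
  exists k; first by split.
  apply: leA_trans hk => i; exact: trace_mono.
Qed.
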